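(* Let $D$ be a drawing in $[0,a]\times[0,b]$ with segments $e_1,\dots,e_\ell$, let $K\subset\mathbb{R}^\ell$ be the linear space of intensity vectors $(s_1,\dots,s_\ell)$ satisfying Kirchhoff's law at every interior node of $D$, and $d=\dim K$. Call a parametrization an injective map $\tau:\{1,\dots,d\}\to\{1,\dots,\ell\}$ such that the map $K\to\mathbb{R}^d$, $(s_i)_i\mapsto(s_{\tau(j)})_j$, is bijective, and let $\mathfrak{D}_\tau:\mathbb{R}^d\to K\subset\mathbb{R}^\ell$ be its inverse. Then for any two parametrizations $\tau,\tau'$, $$\left|\det\left(\mathfrak{D}_\tau^{-1}\circ\mathfrak{D}_{\tau'}\right)\right|=1,$$ where $\mathfrak{D}_\tau^{-1}:K\to\mathbb{R}^d$ denotes the inverse of $\mathfrak{D}_\tau$ onto its image $K$.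
   Context: A drawing in the box $[0,a]\times[0,b]$ is a finite collection of weighted segments $((x_-,y_-),(x_+,y_+),s)$, each vertical ($x_-=x_+$, $y_-<y_+$) or horizontal ($y_-=y_+$, $x_-<x_+$), with real intensity $s$, whose endpoints are nodes. Nodes on the box boundary are entries (bottom/left sides, where a segment starts) and exits (top/right sides, where a segment ends); every other node is interior and is the meeting point of segments coming from the south and/or west and leaving to the north and/or east (splits: one incoming and two outgoing segments; turns: one incoming, one outgoing of the other direction; coalescences: two incoming, one outgoing; crossings: two incoming, two outgoing). Kirchhoff's law at an interior node: the sum of the intensities of the segments arriving from the south and the west equals the sum of the intensities of the segments leaving to the north and the east. *)

(* Defs.v *)
From HB Require Import structures.
From mathcomp Require Import all_boot all_order all_algebra.
From mathcomp Require Import reals.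
Set Implicit Arguments. Unset Strict Implicit. Unset Printing Implicit Defensive.
Import Order.TTheory GRing.Theory Num.Theory.
Local Open Scope ring_scope.

(* A point of the plane and a segment (start point, end point).
   Segments are oriented south->north (vertical) or west->east (horizontal). *)
Definition point (R : realType) := (R * R)%type.
Definition segment (R : realType) := (point R * point R)%type.

Section Drawing.
Variables (R : realType) (a b : R).

Definition in_box (p : point R) : Prop :=
  0 <= p.1 <= a /\ 0 <= p.2 <= b.
Definition interior (p : point R) : Prop :=
  0 < p.1 < a /\ 0 < p.2 < b.

Definition is_vertical (e : segment R) : Prop := e.1.1 = e.2.1 /\ e.1.2 < e.2.2.
Definition is_horizontal (e : segment R) : Prop := e.1.2 = e.2.2 /\ e.1.1 < e.2.1.

Variables (ell : nat) (e : 'I_ell -> segment R).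

Definition vertb (i : 'I_ell) : bool := (e i).1.1 == (e i).2.1.

(* numbers of segments arriving from the south / west, leaving to the north / east *)
Definition in_S (p : point R) := #|[pred i | ((e i).2 == p) && vertb i]|.
Definition in_W (p : point R) := #|[pred i | ((e i).2 == p) && ~~ vertb i]|.
Definition out_N (p : point R) := #|[pred i | ((e i).1 == p) && vertb i]|.
Definition out_E (p : point R) := #|[pred i | ((e i).1 == p) && ~~ vertb i]|.

Definition is_node (p : point R) : Prop := exists i, (e i).1 = p \/ (e i).2 = p.

(* an interior node is a split, a turn, a coalescence or a crossing *)
Definition interior_node_ok (p : point R) : Prop :=
  (in_S p <= 1)%N /\ (in_W p <= 1)%N /\ (out_N p <= 1)%N /\ (out_E p <= 1)%N /\
  (1 <= in_S p + in_W p)%N /\ (1 <= out_N p + out_E p)%N /\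
  ~ [/\ in_S p = 1%N, out_N p = 1%N, in_W p = 0%N & out_E p = 0%N] /\
  ~ [/\ in_W p = 1%N, out_E p = 1%N, in_S p = 0%N & out_N p = 0%N].

Definition is_drawing : Prop :=
  0 < a /\ 0 < b /\
      (forall i, is_vertical (e i) \/ is_horizontal (e i)) /\
      (forall i, in_box (e i).1 /\ in_box (e i).2) /\
      (forall i, ~ interior (e i).1 -> (e i).1.2 = 0 \/ (e i).1.1 = 0) /\
      (forall i, ~ interior (e i).2 -> (e i).2.2 = b \/ (e i).2.1 = a) /\
      (forall p, interior p -> is_node p -> interior_node_ok p).

Definition kirchhoff (s : 'rV[R]_ell) : Prop :=
  forall p : point R, interior p ->
    \sum_(i | (e i).2 == p) s 0 i = \sum_(i | (e i).1 == p) s 0 i.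

Definition proj (d : nat) (tau : 'I_d -> 'I_ell) (s : 'rV[R]_ell) : 'rV[R]_d :=
  \row_j s 0 (tau j).

Definition is_parametrization (d : nat) (tau : 'I_d -> 'I_ell) : Prop :=
  injective tau /\
  forall v : 'rV[R]_d, exists! s : 'rV[R]_ell, kirchhoff s /\ proj tau s = v.

Definition param_inverse (d : nat) (tau : 'I_d -> 'I_ell)
  (D : 'rV[R]_d -> 'rV[R]_ell) : Prop :=
  forall v, kirchhoff (D v) /\ proj tau (D v) = v.

End Drawing.

(* Main.v *)
Require Import Defs.
From HB Require Import structures.
From mathcomp Require Import all_boot all_order all_algebra.
From mathcomp Require Import reals lra.
Import Order.TTheory GRing.Theory Num.Theory.
Local Open Scope ring_scope.


Section TU.
Variable R : realType.

Definition tri (x : R) := x = 0 \/ x = 1 \/ x = -1.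

Lemma triM x y : tri x -> tri y -> tri (x * y).
Proof.
case=> [->|[->| ->]] hy; first by left; rewrite mul0r.
  by rewrite mul1r.
case: hy => [->|[->| ->]]; rewrite ?mulr0 ?mulr1 ?mulrNN ?mulr1; by [left| right; right | right; left].
Qed.

Lemma triX k : tri ((-1) ^+ k).
Proof. rewrite -signr_odd; case: (odd k); rewrite ?expr1 ?expr0; by [right;right|right;left]. Qed.

Definition net m n (M : 'M[R]_(m, n)) :=
  (forall i j, tri (M i j)) /\ (forall i j j', j != j' -> M i j = M i j' -> M i j = 0).
Arguments net {m n} M.

Lemma net_sub m n (M : 'M[R]_(m, n)) i j : net M -> net (row' i (col' j M)).
Proof.
move=> [h1 h2]; split=> a b; rewrite !mxE; first exact: h1.
move=> b' nb; rewrite !mxE; apply: h2; by rewrite (inj_eq lift_inj).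
Qed.

Lemma TU n (M : 'M[R]_n) : net M -> tri (\det M).
Proof.
elim: n M => [|n IH] M hM; first by rewrite det_mx00; right; left.
case: (pickP [pred i | [forall j, M i j == 0]]) => [i /forallP h0 | nz].
  left; rewrite (expand_det_row _ i) big1 // => j _.
  by rewrite (eqP (h0 j)) mul0r.
case: (pickP [pred i | [exists j, (M i j != 0) &&
     [forall j', (j' != j) ==> (M i j' == 0)]]]) =>
   [i /existsP [j /andP [nzj /forallP h1]] | nz1].
  rewrite (expand_det_row _ i) (bigD1 j) //= big1 ?addr0; last first.
    by move=> j' hj; rewrite (eqP (implyP (h1 j') hj)) mul0r.
  rewrite /cofactor; apply: triM; first exact: hM.1.
  apply: triM; first exact: triX.
  exact: (IH (row' i (col' j M)) (@net_sub _ _ M i j hM)).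
left; rewrite -det_tr; apply/eqP/det0P.
exists (const_mx 1).
  apply/eqP => /matrixP /(_ 0 0); rewrite !mxE => /eqP; by rewrite oner_eq0.
apply/matrixP => z i; rewrite !mxE.
have /negbT := nz i; rewrite /= negb_forall => /existsP [j1 nzj1].
have /negbT := nz1 i; rewrite /= negb_exists => /forallP /(_ j1).
rewrite nzj1 /= negb_forall => /existsP [j2]; rewrite negb_imply => /andP [n21 nzj2].
have hne : M i j1 != M i j2.
  apply/eqP => heq; move: nzj1; by rewrite (hM.2 i j1 j2 _ heq) ?eqxx //; rewrite eq_sym.
have hrest : forall j, j != j1 -> j != j2 -> M i j = 0.
  move=> j h1 h2; case: (hM.1 i j) => // hj.
  case: (hM.1 i j1) => [h|]; first by rewrite h eqxx in nzj1.
  case: (hM.1 i j2) => [h|]; first by rewrite h eqxx in nzj2.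
  move=> h2' h1'.
  case: hj => hj.
  - case: h1' => h1'.
    + apply: (hM.2 i j j1 h1); by rewrite hj h1'.
    + case: h2' => h2'; last by move: hne; rewrite h1' h2' eqxx.
      apply: (hM.2 i j j2 h2); by rewrite hj h2'.
  - case: h1' => h1'.
    + case: h2' => h2'; first by move: hne; rewrite h1' h2' eqxx.
      apply: (hM.2 i j j2 h2); by rewrite hj h2'.
    + apply: (hM.2 i j j1 h1); by rewrite hj h1'.
rewrite (bigD1 j1) //= (bigD1 j2) //= big1 ?addr0; last first.
  move=> j /andP [h1 h2]; rewrite !mxE hrest ?mulr0 //. 
rewrite !mxE !mul1r.
case: (hM.1 i j1) => [h|]; first by rewrite h eqxx in nzj1.
case: (hM.1 i j2) => [h|]; first by rewrite h eqxx in nzj2.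
case=> h1 [] h2; rewrite h1 h2 ?eqxx // in hne *; by rewrite ?subrr ?addNr.
Qed.


Lemma tri_int x : tri x -> x \is a Num.int.
Proof. by case=> [->|[->|->]]; rewrite ?rpred0 ?rpred1 ?rpredN1. Qed.

Lemma G m n (A : 'M[R]_(n, m)) (x : 'rV[R]_n) :
  net A -> (forall y : 'rV_n, y *m A = 0 -> y = 0) ->
  (forall j, (x *m A) 0 j \is a Num.int) -> forall k, x 0 k \is a Num.int.
Proof.
move=> hA hker hx k.
have rfA : row_free A.
  rewrite -kermx_eq0; apply/eqP/row_matrixP => i; rewrite row0.
  apply: hker; by rewrite -row_mul mulmx_ker row0.
have rkA : row_full A^T.
  by rewrite -col_leq_rank mxrank_tr (eqP rfA).
set f := fullrankfun rkA.
set B := (rowsub f A^T)^T.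
have uB : B \in unitmx by rewrite unitmx_tr fullrowsub_unit.
have nB : net B.
  case: hA => h1 h2; split=> a b; rewrite !mxE; first exact: h1.
  move=> b' nb; rewrite !mxE; apply: h2.
  by apply: contra nb => /eqP /fullrankfun_inj ->.
have hy : forall j, (x *m B) 0 j \is a Num.int.
  move=> j; have := hx (f j); rewrite !mxE.
  move=> h; rewrite (eq_bigr (fun j0 => x 0 j0 * A j0 (f j))) // => j0 _; by rewrite /B !mxE.
have tdet := @TU _ B nB.
have dB0 : \det B != 0 by rewrite -unitfE -unitmxE.
have hxk : (x *m B *m \adj B) 0 k = \det B * x 0 k.
  by rewrite -mulmxA mul_mx_adj mul_mx_scalar mxE.
have : \det B * x 0 k \is a Num.int.
  rewrite -hxk mxE; apply: rpred_sum => j _; apply: rpredM; first exact: hy.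
  rewrite mxE /cofactor; apply: tri_int; apply: triM; first exact: triX.
  apply: TU; exact: (@net_sub _ _ B k j nB).
case: tdet => [h|[->|->]]; first by rewrite h eqxx in dB0.
  by rewrite mul1r.
by rewrite mulN1r rpredN.
Qed.

End TU.
Arguments tri {R} x.
Arguments net {R m n} M.
Arguments TU {R n} M.
Arguments G {R m n} A x.
Arguments tri_int {R} x.
Arguments triM {R} x y.
Arguments net_sub {R m n} M i j.


Section Main.
Variables (R : realType) (a b : R) (ell : nat) (e : 'I_ell -> segment R).

Definition cc (i : 'I_ell) (p : point R) : R :=
  ((e i).2 == p)%:R - ((e i).1 == p)%:R.

Lemma sum_ind (P : pred 'I_ell) (s : 'rV[R]_ell) :
  \sum_(i | P i) s 0 i = \sum_i (P i)%:R * s 0 i.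
Proof. rewrite big_mkcond; apply: eq_bigr => i _; by case: (P i); rewrite ?mul1r ?mul0r. Qed.

Lemma kirchE s : kirchhoff a b e s <->
  forall p, interior a b p -> \sum_i cc i p * s 0 i = 0.
Proof.
have E : forall p, \sum_i cc i p * s 0 i =
   \sum_(i | (e i).2 == p) s 0 i - \sum_(i | (e i).1 == p) s 0 i.
  move=> p; rewrite !sum_ind -sumrB; apply: eq_bigr => i _; by rewrite mulrBl.
split=> h p hp; move: (h p hp); rewrite E; first by move=> ->; rewrite subrr.
by move/eqP; rewrite subr_eq0 => /eqP.
Qed.

Lemma kirch0 : kirchhoff a b e 0.
Proof. apply/kirchE => p _; apply: big1 => i _; by rewrite mxE mulr0. Qed.

Lemma kirchD s t : kirchhoff a b e s -> kirchhoff a b e t -> kirchhoff a b e (s + t).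
Proof.
move=> /kirchE hs /kirchE ht; apply/kirchE => p hp.
under eq_bigr do rewrite mxE mulrDr.
by rewrite big_split /= hs // ht // addr0.
Qed.

Lemma kirchZ (c : R) s : kirchhoff a b e s -> kirchhoff a b e (c *: s).
Proof.
move=> /kirchE hs; apply/kirchE => p hp.
under eq_bigr do rewrite mxE mulrCA.
by rewrite -mulr_sumr hs // mulr0.
Qed.

Definition interiorb (p : point R) := (0 < p.1 < a) && (0 < p.2 < b).
Lemma interiorP p : reflect (interior a b p) (interiorb p).
Proof. exact: andP. Qed.

Lemma tri_cc i p : tri (cc i p).
Proof.
rewrite /cc; case: eqP => _; case: eqP => _; rewrite ?subrr ?subr0 ?sub0r;
  by [left | right; left | right; right].
Qed.

Definition nodes := undup (filter interiorb
  (map (fun i => (e i).1) (enum 'I_ell) ++ map (fun i => (e i).2) (enum 'I_ell))).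

Lemma cc_nodes i p : interior a b p -> p \notin nodes -> cc i p = 0.
Proof.
move=> /interiorP hp hn; rewrite /cc.
case: eqP => h2.
  exfalso; move/negP: hn; apply; rewrite mem_undup mem_filter hp mem_cat.
  by rewrite -h2 (map_f (fun i => (e i).2)) ?orbT // mem_enum.
case: eqP => h1 //; last by rewrite subrr.
exfalso; move/negP: hn; apply; rewrite mem_undup mem_filter hp mem_cat.
by rewrite -h1 (map_f (fun i => (e i).1)) // mem_enum.
Qed.

Lemma L d (tau' : 'I_d -> 'I_ell) :
  (forall s, kirchhoff a b e s -> (forall j, s 0 (tau' j) = 0) -> s = 0) ->
  forall s, kirchhoff a b e s -> (forall j, s 0 (tau' j) \is a Num.int) ->
  forall i, s 0 i \is a Num.int.
Proof.
move=> huniq s hs hint.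
pose F := [set i | i \notin codom tau'].
pose m := size nodes.
pose p0 : point R := (0, 0).
pose A : 'M[R]_(#|F|, m) := \matrix_(k, j) cc (enum_val k) (nth p0 nodes j).
have unodes : uniq nodes by apply: undup_uniq.
have nA : net A.
  split=> k j; rewrite mxE; first exact: tri_cc.
  move=> j' njj'; rewrite mxE => heq.
  have hpp : nth p0 nodes j != nth p0 nodes j' by rewrite nth_uniq.
  move: heq hpp; rewrite /cc.
  case: eqP => h2; case: eqP => h1; case: eqP => h2'; case: eqP => h1';
    rewrite ?subrr ?subr0 ?sub0r // => heq;
    try (by rewrite -h2 -h2' eqxx); try (by rewrite -h1 -h1' eqxx);
    exfalso; move: heq; move/eqP; rewrite ?oppr_eq0 ?oner_eq0 //;
    try (by rewrite -subr_eq0 opprK -mulr2n pnatr_eq0);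
    by rewrite eq_sym -subr_eq0 opprK -mulr2n pnatr_eq0.
pose x : 'rV[R]_#|F| := \row_k s 0 (enum_val k).
have hF : forall i, i \notin F -> s 0 i \is a Num.int.
  move=> i; rewrite inE negbK => /codomP [j ->]; exact: hint.
have hxA : forall j, (x *m A) 0 j \is a Num.int.
  move=> j.
  have hpj : interior a b (nth p0 nodes j).
    apply/interiorP; have := mem_nth p0 (ltn_ord j).
    by rewrite mem_undup mem_filter => /andP [].
  have := (proj1 (kirchE s) hs _ hpj).
  rewrite (bigID (fun i => i \in F)) /= => /eqP; rewrite addr_eq0 => /eqP hsplit.
  have -> : (x *m A) 0 j = \sum_(i in F) cc i (nth p0 nodes j) * s 0 i.
    rewrite mxE [RHS]big_enum_val; apply: eq_bigr => k _; by rewrite !mxE mulrC.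
  rewrite hsplit rpredN; apply: rpred_sum => i hi; apply: rpredM.
    exact: tri_int (tri_cc _ _).
  exact: hF.
have hker : forall y : 'rV[R]_#|F|, y *m A = 0 -> y = 0.
  move=> y hy; apply/rowP => k; rewrite mxE.
  have Fk := enum_valP k.
  pose t : 'rV[R]_ell := \row_i (if i \in F then y 0 (enum_rank_in Fk i) else 0).
  have ht : kirchhoff a b e t.
    apply/kirchE => p hp.
    rewrite (bigID (fun i => i \in F)) /= [X in _ + X]big1 ?addr0; last first.
      by move=> i /negbTE hi; rewrite mxE hi mulr0.
    rewrite big_enum_val.
    under eq_bigr do rewrite mxE (enum_valP _) (enum_valK_in Fk).
    case: (boolP (p \in nodes)) => hn.
      have hix : (index p nodes < m)%N by rewrite index_mem.
      have := congr1 (fun M : 'rV[R]_m => M 0 (Ordinal hix)) hy.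
      rewrite !mxE /= => h; apply: (etrans _ h); by apply: eq_bigr => i _; rewrite mxE nth_index // mulrC.
    by rewrite big1 // => i _; rewrite cc_nodes // mul0r.
  have t0 : t = 0.
    apply: (huniq t ht) => j; rewrite mxE inE codom_f //.
  have := congr1 (fun M : 'rV[R]_ell => M 0 (enum_val k)) t0.
  by rewrite !mxE Fk enum_valK_in.
have := G A x nA hker hxA.
move=> hx i; case: (boolP (i \in F)) => hi; last exact: hF.
have := hx (enum_rank_in hi i); rewrite mxE enum_rankK_in //.
Qed.

End Main.

Lemma detZ (R : realType) n (A : 'M[R]_n) :
  (forall i j, A i j \is a Num.int) -> \det A \is a Num.int.
Proof.
move=> h; rewrite /determinant; apply: rpred_sum => s _.
rewrite rpredM ?rpredX ?rpredN1 //; apply: rpred_prod => i _; exact: h.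
Qed.

Theorem lemma3 (R : realType) (a b : R) (ell d : nat)
    (e : 'I_ell -> segment R) (tau tau' : 'I_d -> 'I_ell)
    (D D' : 'rV[R]_d -> 'rV[R]_ell) :
  is_drawing a b e ->
  is_parametrization a b e tau -> is_parametrization a b e tau' ->
  param_inverse a b e tau D -> param_inverse a b e tau' D' ->
  `| \det (lin1_mx (proj tau \o D')) | = 1.
Proof.
move=> _ [_ hu] [_ hu'] hD hD'.
have uniqP : forall (t : 'I_d -> 'I_ell), (forall v : 'rV[R]_d, exists! s : 'rV[R]_ell,
     kirchhoff a b e s /\ proj t s = v) ->
   forall s s', kirchhoff a b e s -> kirchhoff a b e s' -> proj t s = proj t s' -> s = s'.
  move=> t ht s s' hs hs' hss; case: (ht (proj t s)) => x [_ hx].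
  by rewrite -(hx s (conj hs erefl)) -(hx s' (conj hs' (esym hss))).
have hz : forall (t : 'I_d -> 'I_ell), (forall v : 'rV[R]_d, exists! s : 'rV[R]_ell,
     kirchhoff a b e s /\ proj t s = v) ->
   forall s, kirchhoff a b e s -> (forall j, s 0 (t j) = 0) -> s = 0.
  move=> t ht s hs h0; apply: (uniqP t ht) => //; first exact: kirch0.
  by apply/rowP => j; rewrite !mxE h0.
have hDe : forall (t : 'I_d -> 'I_ell) (DD : 'rV[R]_d -> 'rV[R]_ell),
    param_inverse a b e t DD -> forall k l, DD 'e_k 0 (t l) = (k == l)%:R.
  move=> t DD hDD k l; have := congr1 (fun w : 'rV[R]_d => w 0 l) (hDD 'e_k).2.
  by rewrite /= /proj !mxE eqxx eq_sym.
have intM : forall (t t' : 'I_d -> 'I_ell) (DD : 'rV[R]_d -> 'rV[R]_ell),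
    (forall v : 'rV[R]_d, exists! s : 'rV[R]_ell, kirchhoff a b e s /\ proj t' s = v) ->
    param_inverse a b e t' DD ->
    forall i j, lin1_mx (proj t \o DD) i j \is a Num.int.
  move=> t t' DD ht' hDD i j; rewrite /= !mxE.
  apply: (@L R a b ell e d t' (hz t' ht') (DD 'e_i)); first exact: (hDD _).1.
  by move=> l; rewrite hDe // rpred_nat.
set M := lin1_mx (proj tau \o D'). set M' := lin1_mx (proj tau' \o D).
have MM : M *m M' = 1%:M.
  apply/matrixP => i j; rewrite !mxE.
  set s := D' 'e_i.
  have ks : kirchhoff a b e s := (hD' 'e_i).1.
  pose t := \sum_k (s 0 (tau k)) *: D 'e_k.
  have kt : kirchhoff a b e t.
    apply: big_ind; [exact: kirch0 | exact: kirchD | move=> k _].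
    apply: kirchZ; exact: (hD _).1.
  have pt : proj tau s = proj tau t.
    apply/rowP => l; rewrite /proj !mxE summxE.
    under eq_bigr do rewrite mxE (hDe _ _ hD).
    rewrite (bigD1 l) //= eqxx mulr1 big1 ?addr0 // => k /negbTE ->.
    by rewrite mulr0.
  have st := uniqP _ hu _ _ ks kt pt.
  rewrite -(hDe _ _ hD') -/s st summxE; apply: eq_bigr => k _.
  by rewrite !mxE.
have det1M : \det M * \det M' = 1 by rewrite -det_mulmx MM det1.
have i1 : \det M \is a Num.int by apply: detZ; exact: (intM _ _ _ hu' hD').
have i2 : \det M' \is a Num.int by apply: detZ; exact: (intM _ _ _ hu hD).
have nz1 : \det M != 0 by apply/eqP => h; move: det1M; rewrite h mul0r => /eqP; rewrite eq_sym oner_eq0.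
have nz2 : \det M' != 0 by apply/eqP => h; move: det1M; rewrite h mulr0 => /eqP; rewrite eq_sym oner_eq0.
have g1 := norm_intr_ge1 i1 nz1.
have g2 := norm_intr_ge1 i2 nz2.
have : `|\det M| * `|\det M'| = 1 by rewrite -normrM det1M normr1.
move=> h; nra.
Qed.
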